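(* Let $X_1,X_2,Y_1,Y_2$ be totally ordered alphabets. For every $M\in\mathrm{Pack}$, \[\iota_{(X_1,X_2),(Y_1,Y_2)}\big(\Phi_M(X_1X_2,Y_1Y_2)\big)=\sum_{\substack{(\sigma',\sigma'')\in \mathrm{Adm}(\mathrm{row}(M))\\ (\tau',\tau'')\in \mathrm{Adm}(\mathrm{col}(M))}} \Phi_{\mu(\sigma')M\mu(\tau')^\top}(X_1,Y_1)\otimes \Phi_{\mu(\sigma'')M\mu(\tau'')^\top}(X_2,Y_2).\]
   Context: A totally ordered alphabet is a finite or countable set with a total order. $\mathbf{A}_{X,Y}=\mathbb{Q}[[t_{i,j}\mid i\in X,\ j\in Y]]$. A packed matrix is a matrix with entries in $\mathbb{N}$ with no zero row and no zero column (the empty matrix $1$ is packed); $\mathrm{Pack}$ is their set; $\mathrm{row}(M),\mathrm{col}(M)$ are the numbers of rows and columns. For $M=(m_{r,s})\in\mathrm{Pack}$ with $k$ rows and $l$ columns, $\Phi_M(X,Y)=\sum_{i_1<\dots<i_k\in X,\ j_1<\dots<j_l\in Y}\prod_{r,s} t_{i_r,j_s}^{m_{r,s}}$, extended linearly. For $\alpha:[k]\to[n]$, $\mu(\alpha)$ is the $n\times k$ matrix with $\mu(\alpha)_{i,j}=\delta_{i,\alpha(j)}$. $XY$ denotes $X\times Y$ with the lexicographic order ($(x,y)\leq(x',y')$ iff $x<x'$, or $x=x'$ and $y\leq y'$). $\iota_{(X_1,X_2),(Y_1,Y_2)}:\mathbf{A}_{X_1X_2,Y_1Y_2}\to\mathbf{A}_{X_1,Y_1}\hat\otimes\mathbf{A}_{X_2,Y_2}$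 is the continuous algebra map $t_{(x_1,x_2),(y_1,y_2)}\mapsto t_{x_1,y_1}\otimes t_{x_2,y_2}$. For $k\in\mathbb{N}$, $\mathrm{Adm}(k)$ is the set of pairs $(\sigma',\sigma'')$ of surjective maps $\sigma':[k]\twoheadrightarrow[k']$, $\sigma'':[k]\twoheadrightarrow[k'']$ (some $k',k''$) such that $\sigma'(1)\leq\dots\leq\sigma'(k)$ and, for all $i<j$ in $[k]$ with $\sigma'(i)=\sigma'(j)$, one has $\sigma''(i)<\sigma''(j)$. *)

(* Defs.v *)
From HB Require Import structures.
From mathcomp Require Import all_boot all_order all_algebra.
From mathcomp Require Import finmap multiset.

Set Implicit Arguments.
Unset Strict Implicit.
Unset Printing Implicit Defensive.

Import Order.TTheory GRing.Theory.

Local Open Scope ring_scope.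

(* A monomial in commuting variables indexed by V is a finite multiset of
   variables; a formal power series over Q in these variables is given by its
   coefficient function.  [series V] models Q[[t_v | v in V]]. *)
Definition series (V : choiceType) := {mset V}%mset -> rat.

(* Completed tensor product Q[[t_v | v in V1]] ^⊗ Q[[t_w | w in V2]]
   = Q[[t_v ⊗ 1, 1 ⊗ t_w]] : coefficients indexed by pairs of monomials. *)
Definition series2 (V1 V2 : choiceType) := {mset V1}%mset -> {mset V2}%mset -> rat.

Definition tensor (V1 V2 : choiceType) (f : series V1) (g : series V2)
  : series2 V1 V2 := fun n1 n2 => f n1 * g n2.

Fixpoint all_tuples (T : Type) (s : seq T) (k : nat) : seq (seq T) :=
  if k is k'.+1 then [seq x :: t | x <- s, t <- all_tuples s k'] else [:: [::]].

Definition packed (k l : nat) (M : 'M[nat]_(k, l)) : bool :=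
  [forall i, exists j, M i j != 0%N] && [forall j, exists i, M i j != 0%N].

(* the list of variables (with multiplicity) of the monomial
   prod_{r,s} t_{i_r, j_s}^{m_{r,s}} *)
Definition pmono (X Y : Type) (k l : nat) (M : 'M[nat]_(k, l))
  (ii : seq X) (jj : seq Y) : seq (X * Y) :=
  flatten [seq nseq (M r.1 s.1) (r.2, s.2)
          | r <- zip (enum 'I_k) ii, s <- zip (enum 'I_l) jj].

(* Phi_M(X,Y): the coefficient of the monomial n is the number of pairs of
   strictly increasing tuples i_1 < .. < i_k in X, j_1 < .. < j_l in Y with
   prod_{r,s} t_{i_r,j_s}^{m_{r,s}} = n.  (For packed M every such i_r, j_s
   occurs in n, so it suffices to draw them from the variables of n.) *)
Definition Phi d1 d2 (X : orderType d1) (Y : orderType d2) (k l : nat)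
  (M : 'M[nat]_(k, l)) : series (X * Y)%type := fun n =>
  (\sum_(ii <- all_tuples (undup [seq p.1 | p <- n]) k)
    \sum_(jj <- all_tuples (undup [seq p.2 | p <- n]) l)
      [&& sorted <%O ii, sorted <%O jj & seq_mset (pmono M ii jj) == n])%N%:R.

Definition mu (k n : nat) (a : 'I_k -> 'I_n) : 'M[nat]_(n, k) :=
  \matrix_(i, j) (i == a j : nat).

Definition surj (k n : nat) (a : 'I_k -> 'I_n) : bool :=
  [forall y, exists x, a x == y].

Definition adm (k k1 k2 : nat) (s1 : 'I_k -> 'I_k1) (s2 : 'I_k -> 'I_k2) : bool :=
  [&& surj s1, surj s2,
      [forall i : 'I_k, forall j : 'I_k, (i <= j)%N ==> (s1 i <= s1 j)%N] &
      [forall i : 'I_k, forall j : 'I_k, ((i < j)%N && (s1 i == s1 j)) ==> (s2 i < s2 j)%N]].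

(* iota_{(X1,X2),(Y1,Y2)} : A_{X1X2, Y1Y2} -> A_{X1,Y1} ^⊗ A_{X2,Y2}, the
   continuous algebra map t_{(x1,x2),(y1,y2)} |-> t_{x1,y1} ⊗ t_{x2,y2}.
   The coefficient of (n1, n2) in iota F is the sum of the coefficients of F
   at all monomials m sent to n1 ⊗ n2; such m have degree deg n1 and all
   their variables among the ((x1,x2),(y1,y2)) with (x1,y1) in n1 and
   (x2,y2) in n2, so the candidates below exhaust them (each once). *)
Definition iota_map d1 d2 e1 e2 (X1 : orderType d1) (X2 : orderType d2)
  (Y1 : orderType e1) (Y2 : orderType e2)
  (F : series ((X1 *l X2) * (Y1 *l Y2))%type) : series2 (X1 * Y1)%type (X2 * Y2)%type :=
  fun n1 n2 =>
  let C := [seq (((p.1, q.1) : X1 *l X2), ((p.2, q.2) : Y1 *l Y2))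
           | p <- undup n1, q <- undup n2] in
  let cands := undup [seq seq_mset t | t <- all_tuples C (size n1)] in
  \sum_(m <- cands | (seq_mset [seq (v.1.1, v.2.1) | v <- enum_mset m] == n1)
                     && (seq_mset [seq (v.1.2, v.2.2) | v <- enum_mset m] == n2))
     F m.

(* Main.v *)
Require Import Defs.
From HB Require Import structures.
From mathcomp Require Import all_boot all_order all_algebra.
From mathcomp Require Import finmap multiset.
Import Order.TTheory GRing.Theory.
Set Implicit Arguments. Unset Strict Implicit. Unset Printing Implicit Defensive.

Section Gen.
Variables (R : eqType) (idx : R) (op : Monoid.com_law idx).

Lemma reindex_seq (A B : eqType) (s : seq A) (t : seq B) (P : pred A) (Q : pred B)
  (f : A -> B) (g : B -> A) (F : A -> R) :
  uniq s -> uniq t ->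
  (forall x, x \in s -> P x -> (f x \in t) && Q (f x)) ->
  (forall y, y \in t -> Q y -> (g y \in s) && P (g y)) ->
  (forall x, x \in s -> P x -> g (f x) = x) ->
  (forall y, y \in t -> Q y -> f (g y) = y) ->
  \big[op/idx]_(x <- s | P x) F x = \big[op/idx]_(y <- t | Q y) F (g y).
Proof.
move=> us ut fST gST gf fg.
rewrite -big_filter -[RHS]big_filter -(big_map g predT F).
apply: perm_big; apply: uniq_perm; first exact: filter_uniq.
  rewrite map_inj_in_uniq ?filter_uniq // => y1 y2.
  rewrite !mem_filter => /andP[q1 i1] /andP[q2 i2] e.
  by rewrite -(fg _ i1 q1) -(fg _ i2 q2) e.
move=> x; apply/idP/idP.
  rewrite mem_filter => /andP[px xs]; apply/mapP; exists (f x); last by rewrite gf.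
  by move: (fST _ xs px) => /andP[a b]; rewrite mem_filter a b.
move=> /mapP[y]; rewrite mem_filter => /andP[qy yt] ->.
by move: (gST _ yt qy) => /andP[a b]; rewrite mem_filter a b.
Qed.

Lemma big_uniq_supp (A : eqType) (s t : seq A) (F : A -> R) :
  uniq s -> uniq t ->
  (forall x, x \in s -> F x != idx -> x \in t) ->
  (forall x, x \in t -> F x != idx -> x \in s) ->
  \big[op/idx]_(x <- s) F x = \big[op/idx]_(x <- t) F x.
Proof.
move=> us ut h1 h2.
have E (u : seq A) : \big[op/idx]_(x <- u) F x = \big[op/idx]_(x <- u | F x != idx) F x.
  rewrite [RHS]big_mkcond; apply: eq_bigr => x _.
  by case: eqP => // ->.
rewrite !E; apply: (@reindex_seq _ _ _ _ _ _ id id) => //.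
- by move=> x xs /= fx; rewrite fx h1.
- by move=> x xs /= fx; rewrite fx h2.
Qed.
End Gen.

Lemma mem_all_tuples (T : eqType) (s : seq T) k t :
  (t \in all_tuples s k) = (size t == k) && all (mem s) t.
Proof.
elim: k t => [|k IH] t /=.
  by rewrite inE; case: t.
apply/allpairsP/idP.
  by move=> [[x u] /= [xs uk ->]]; move: uk; rewrite /= eqSS xs IH.
case: t => [|x u] //=; rewrite eqSS => /and3P[uk xs au].
by exists (x, u); split=> //=; rewrite IH uk.
Qed.

Lemma uniq_all_tuples (T : eqType) (s : seq T) k :
  uniq s -> uniq (all_tuples s k).
Proof.
move=> us; elim: k => [|k IH] //=.
apply: allpairs_uniq => // [[x u] [y v]] _ _ /= [-> ->] //.
Qed.

Lemma nth_pick (T : Type) (s : seq T) (i : nat) : i < size s -> exists x0 : T, True.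
Proof. by case: s => // x. Qed.

Definition dseq d (T : orderType d) (s : seq T) : seq T := sort <=%O (undup s).

Lemma dseq_sorted d (T : orderType d) (s : seq T) : sorted <%O (dseq s).
Proof. by rewrite /dseq sort_lt_sorted undup_uniq. Qed.

Lemma mem_dseq d (T : orderType d) (s : seq T) : dseq s =i s.
Proof. by move=> x; rewrite /dseq mem_sort mem_undup. Qed.

Lemma dseq_eq d (T : orderType d) (s t : seq T) : sorted <%O t -> t =i s -> dseq s = t.
Proof.
move=> st ts; apply: lt_sorted_eq => //; first exact: dseq_sorted.
by move=> x; rewrite mem_dseq ts.
Qed.

Lemma size_dseq d (T : orderType d) (s : seq T) : size (dseq s) <= size s.
Proof. by rewrite /dseq size_sort size_undup. Qed.

Lemma dseq_uniq d (T : orderType d) (s : seq T) : uniq (dseq s).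
Proof. exact: lt_sorted_uniq (dseq_sorted s). Qed.

Definition pull (T : Type) (xs : seq T) (a : seq nat) : seq T := pmap (onth xs) a.

Lemma onth_lt (T : Type) (x0 : T) (xs : seq T) i : i < size xs -> onth xs i = Some (nth x0 xs i).
Proof. by elim: xs i => [|x xs IH] [|i] //= H; rewrite IH. Qed.

Lemma pull_nth (T : Type) (x0 : T) (xs : seq T) (a : seq nat) :
  all (fun i => i < size xs) a -> pull xs a = map (nth x0 xs) a.
Proof.
elim: a => [|i a IH] //= /andP[hi ha].
by rewrite /pull /= (onth_lt x0 hi) /= -IH.
Qed.

Lemma size_pull (T : Type) (xs : seq T) (a : seq nat) :
  all (fun i => i < size xs) a -> size (pull xs a) = size a.
Proof.
case: xs => [|x0 xs] ha; last by rewrite (pull_nth x0) // size_map.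
by case: a ha => //.
Qed.

Lemma pull_mem (T : eqType) (xs : seq T) (a : seq nat) :
  all (fun i => i < size xs) a -> (forall i, i < size xs -> i \in a) -> pull xs a =i xs.
Proof.
case: xs => [|x0 xs] ha hc.
  by case: a ha {hc}.
rewrite (pull_nth x0) // => x; apply/mapP/idP.
  by move=> [i ia ->]; apply: mem_nth; exact: (allP ha).
move=> /(nthP x0) [i hi <-]; exists i => //; exact: hc.
Qed.

Lemma pull_sub (T : eqType) (xs : seq T) (a : seq nat) : {subset pull xs a <= xs}.
Proof.
move=> x; rewrite /pull mem_pmap => /mapP [i _].
elim: xs i => [|y xs IH] [|i] //=.
  by case=> ->; rewrite mem_head.
by move/IH; rewrite inE => ->; rewrite orbT.
Qed.

Definition gr k n (s : {ffun 'I_k -> 'I_n}) : seq nat := [seq val (s r) | r <- enum 'I_k].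

Lemma size_gr k n (s : {ffun 'I_k -> 'I_n}) : size (gr s) = k.
Proof. by rewrite size_map size_enum_ord. Qed.

Lemma nth_gr k n (s : {ffun 'I_k -> 'I_n}) (r : 'I_k) : nth 0 (gr s) r = s r.
Proof.
rewrite /gr (nth_map r) ?size_enum_ord //.
by rewrite (_ : nth r (enum 'I_k) r = r) //; apply: val_inj; rewrite /= nth_enum_ord.
Qed.

Lemma gr_lt k n (s : {ffun 'I_k -> 'I_n}) : all (fun i => i < n) (gr s).
Proof. by apply/allP => i /mapP [r _ ->]; exact: ltn_ord. Qed.

Lemma gr_inj k n : injective (@gr k n).
Proof.
move=> s t e; apply/ffunP => r; apply: val_inj.
by move: (congr1 (nth 0 ^~ r) e); rewrite !nth_gr.
Qed.

Lemma gr_mk k n (a : seq nat) (H : forall r : 'I_k, nth 0 a r < n) :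
  size a = k -> gr [ffun r => Ordinal (H r)] = a.
Proof.
move=> sa; apply: (@eq_from_nth _ 0); first by rewrite size_gr.
move=> i; rewrite size_gr => hi.
by rewrite (nth_gr _ (Ordinal hi)) ffunE.
Qed.

Section AdmFacts.
Variables (k k1 k2 : nat) (s1 : {ffun 'I_k -> 'I_k1}) (s2 : {ffun 'I_k -> 'I_k2}).
Hypothesis hadm : adm s1 s2.

Lemma adm_surj1 j : j < k1 -> j \in gr s1.
Proof.
move: hadm => /and4P[/forallP h _ _ _] hj.
have /existsP [x /eqP hx] := h (Ordinal hj).
by apply/mapP; exists x; rewrite ?mem_enum // hx.
Qed.

Lemma adm_surj2 j : j < k2 -> j \in gr s2.
Proof.
move: hadm => /and4P[_ /forallP h _ _] hj.
have /existsP [x /eqP hx] := h (Ordinal hj).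
by apply/mapP; exists x; rewrite ?mem_enum // hx.
Qed.

Lemma adm_mono i j : i <= j -> j < k -> nth 0 (gr s1) i <= nth 0 (gr s1) j.
Proof.
move=> ij jk; have ik : i < k by apply: leq_ltn_trans jk.
rewrite (nth_gr _ (Ordinal ik)) (nth_gr _ (Ordinal jk)).
move: hadm => /and4P[_ _ /forallP h _].
by move: (h (Ordinal ik)) => /forallP /(_ (Ordinal jk)) /implyP; apply.
Qed.

Lemma adm_fib i j : i < j -> j < k -> nth 0 (gr s1) i = nth 0 (gr s1) j ->
  nth 0 (gr s2) i < nth 0 (gr s2) j.
Proof.
move=> ij jk; have ik : i < k by apply: ltn_trans jk.
rewrite (nth_gr _ (Ordinal ik)) (nth_gr _ (Ordinal jk)) (nth_gr _ (Ordinal ik)) (nth_gr _ (Ordinal jk)).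
move: hadm => /and4P[_ _ _ /forallP h] e.
move: (h (Ordinal ik)) => /forallP /(_ (Ordinal jk)) /implyP; apply.
by rewrite /= ij /=; apply/eqP; apply: val_inj.
Qed.
End AdmFacts.

Definition comb (A B : Type) (a b : seq nat) (xs : seq A) (ys : seq B) : seq (A * B) :=
  zip (pull xs a) (pull ys b).

Lemma pull_index (T : eqType) (xs u : seq T) :
  {subset u <= xs} -> pull xs [seq index x xs | x <- u] = u.
Proof.
case: xs => [|x0 xs] hu.
  by case: u hu => // x u /(_ x (mem_head _ _)).
rewrite (pull_nth x0); last by apply/allP => i /mapP [x /hu xu ->]; rewrite index_mem.
by rewrite -map_comp -[RHS]map_id; apply/eq_in_map => x /hu xu /=; rewrite nth_index.
Qed.

Section Shape.
Variables (dA dB : Order.disp_t) (A : orderType dA) (B : orderType dB).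

Definition shp (ii : seq (A *l B)) (k1 k2 : nat) (a b : seq nat) : bool :=
  [&& size (dseq [seq x.1 | x <- ii]) == k1, size (dseq [seq x.2 | x <- ii]) == k2,
      [seq index x.1 (dseq [seq y.1 | y <- ii]) | x <- ii] == a &
      [seq index x.2 (dseq [seq y.2 | y <- ii]) | x <- ii] == b].

Lemma comb_dec (ii : seq (A *l B)) k1 k2 a b : shp ii k1 k2 a b ->
  comb a b (dseq [seq x.1 | x <- ii]) (dseq [seq x.2 | x <- ii]) = ii.
Proof.
move=> /and4P[_ _ /eqP <- /eqP <-].
rewrite /comb.
set d1 := dseq _; set d2 := dseq _.
have -> : [seq index x.1 d1 | x <- ii] = [seq index x d1 | x <- [seq y.1 | y <- ii]].
  by rewrite -map_comp.
have -> : [seq index x.2 d2 | x <- ii] = [seq index x d2 | x <- [seq y.2 | y <- ii]].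
  by rewrite -map_comp.
rewrite !pull_index ?zip_unzip // => x; by rewrite mem_dseq.
Qed.

Lemma dec_in (UA : seq A) (UB : seq B) k (ii : seq (A *l B)) k1 k2 a b :
  ii \in all_tuples [seq ((x, y) : A *l B) | x <- UA, y <- UB] k -> shp ii k1 k2 a b ->
  (dseq [seq x.1 | x <- ii] \in all_tuples UA k1) &&
  (dseq [seq x.2 | x <- ii] \in all_tuples UB k2).
Proof.
rewrite mem_all_tuples => /andP[_ /allP hii] /and4P[h1 h2 _ _].
rewrite !mem_all_tuples h1 h2 /=; apply/andP; split; apply/allP => z;
  rewrite mem_dseq => /mapP [x /hii /allpairsP [[u v] [/= hu hv ->]] ->] //.
Qed.

Section Fixed.
Variables (k k1 k2 : nat) (s1 : {ffun 'I_k -> 'I_k1}) (s2 : {ffun 'I_k -> 'I_k2}).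
Hypothesis hadm : adm s1 s2.
Variables (ii1 : seq A) (ii2 : seq B).
Hypotheses (sz1 : size ii1 = k1) (sz2 : size ii2 = k2).
Hypotheses (so1 : sorted <%O ii1) (so2 : sorted <%O ii2).

Let a := gr s1.
Let b := gr s2.
Let c : seq (A *l B) := comb a b ii1 ii2.

Lemma alla : all (fun i => i < size ii1) a. Proof. by rewrite sz1 gr_lt. Qed.
Lemma allb : all (fun i => i < size ii2) b. Proof. by rewrite sz2 gr_lt. Qed.

Lemma size_c : size c = k.
Proof. by rewrite /c /comb size_zip !size_pull ?alla ?allb // !size_gr minnn. Qed.

Lemma c_fst : [seq x.1 | x <- c] = pull ii1 a.
Proof. by rewrite -/(unzip1 _) unzip1_zip // !size_pull ?alla ?allb // !size_gr. Qed.

Lemma c_snd : [seq x.2 | x <- c] = pull ii2 b.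
Proof. by rewrite -/(unzip2 _) unzip2_zip // !size_pull ?alla ?allb // !size_gr. Qed.

Lemma dseq_c1 : dseq [seq x.1 | x <- c] = ii1.
Proof.
rewrite c_fst; apply: dseq_eq => // x; rewrite pull_mem ?alla // => i.
by rewrite sz1; exact: (adm_surj1 hadm).
Qed.

Lemma dseq_c2 : dseq [seq x.2 | x <- c] = ii2.
Proof.
rewrite c_snd; apply: dseq_eq => // x; rewrite pull_mem ?allb // => i.
by rewrite sz2; exact: (adm_surj2 hadm).
Qed.

Lemma index_pull (T : eqType) (xs : seq T) (u : seq nat) :
  uniq xs -> all (fun i => i < size xs) u -> [seq index x xs | x <- pull xs u] = u.
Proof.
case: xs => [|x0 xs] uq hu.
  by case: u hu.
rewrite (pull_nth x0) // -map_comp -[RHS]map_id; apply/eq_in_map => i hi.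
by rewrite /comp /id index_uniq //; exact: (allP hu).
Qed.

Lemma shp_c : shp c k1 k2 a b.
Proof.
rewrite /shp dseq_c1 dseq_c2 sz1 sz2 !eqxx /=.
have -> : [seq index x.1 ii1 | x <- c] = [seq index x ii1 | x <- [seq y.1 | y <- c]].
  by rewrite -map_comp.
have -> : [seq index x.2 ii2 | x <- c] = [seq index x ii2 | x <- [seq y.2 | y <- c]].
  by rewrite -map_comp.
rewrite c_fst c_snd !index_pull ?eqxx ?alla ?allb //; exact: lt_sorted_uniq.
Qed.

Lemma sorted_c : sorted <%O c.
Proof.
case: (posnP k) => [k0|kpos].
  by have /size0nil -> : size c = 0 by rewrite size_c k0.
have [x0 _] : exists x0 : A, True.
  by apply: (@nth_pick _ ii1 (s1 (Ordinal kpos))); rewrite sz1.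
have [y0 _] : exists y0 : B, True.
  by apply: (@nth_pick _ ii2 (s2 (Ordinal kpos))); rewrite sz2.
apply/(sortedP (x0, y0)) => i; rewrite size_c => hi.
have hi' : i < k by apply: ltnW.
have Hn j : j < k -> nth (x0, y0) c j = (nth x0 ii1 (nth 0 a j), nth y0 ii2 (nth 0 b j)).
  move=> hj; rewrite /c /comb nth_zip; last first.
    by rewrite !size_pull ?alla ?allb // !size_gr.
  by rewrite (pull_nth x0) ?alla // (pull_nth y0) ?allb // (nth_map 0) ?(nth_map 0) ?size_gr.
rewrite !Hn // ltEprodlexi /=.
have le1 : nth 0 a i <= nth 0 a i.+1 by apply: (adm_mono hadm).
have lta j : j < k -> nth 0 a j < size ii1.
  by move=> hj; rewrite sz1 /a (nth_gr s1 (Ordinal hj)) ltn_ord.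
have ltb j : j < k -> nth 0 b j < size ii2.
  by move=> hj; rewrite sz2 /b (nth_gr s2 (Ordinal hj)) ltn_ord.
move: le1; rewrite leq_eqVlt => /orP[/eqP e|lt].
  rewrite e lexx /=.
  rewrite (lt_sorted_ltn_nth y0 so2) ?inE ?ltb //.
  exact: (adm_fib hadm).
have hlt : (nth x0 ii1 (nth 0 a i) < nth x0 ii1 (nth 0 a i.+1))%O.
  by rewrite (lt_sorted_ltn_nth x0 so1) ?inE ?lta.
by rewrite (ltW hlt) (lt_geF hlt).
Qed.

Lemma c_in (UA : seq A) (UB : seq B) :
  ii1 \in all_tuples UA k1 -> ii2 \in all_tuples UB k2 ->
  c \in all_tuples [seq ((x, y) : A *l B) | x <- UA, y <- UB] k.
Proof.
rewrite !mem_all_tuples => /andP[_ /allP h1] /andP[_ /allP h2].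
rewrite size_c eqxx /=; apply/allP => [[x y]] hxy; apply/allpairsP; exists (x, y); split => //.
  apply: h1; apply: (@pull_sub _ _ a); rewrite -c_fst; apply/mapP; by exists (x, y).
apply: h2; apply: (@pull_sub _ _ b); rewrite -c_snd; apply/mapP; by exists (x, y).
Qed.
End Fixed.
End Shape.

Lemma zip_enum (T : Type) (x0 : T) k (ii : seq T) : size ii = k ->
  zip (enum 'I_k) ii = [seq ((r : 'I_k), nth x0 ii r) | r <- enum 'I_k].
Proof.
move=> hs; rewrite -(zip_map id (fun r : 'I_k => nth x0 ii r)) map_id.
congr zip; rewrite (map_comp (nth x0 ii) val) val_enum_ord -hs.
by rewrite -/(mkseq _ _) mkseq_nth.
Qed.

Lemma zip_mapr (S T T' : Type) (f : T -> T') (s : seq S) (t : seq T) :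
  zip s (map f t) = [seq (p.1, f p.2) | p <- zip s t].
Proof. by elim: s t => [|x s IH] [|y t] //=; rewrite IH. Qed.

Lemma map_pmono (X Y X' Y' : Type) k l (M : 'M[nat]_(k, l)) (ii : seq X) (jj : seq Y)
  (f : X -> X') (g : Y -> Y') :
  [seq (f v.1, g v.2) | v <- pmono M ii jj] = pmono M (map f ii) (map g jj).
Proof.
rewrite /pmono map_flatten map_allpairs !zip_mapr allpairs_mapl allpairs_mapr /=.
congr flatten; apply: eq_allpairs => r s /=.
by rewrite map_nseq.
Qed.

Lemma count_pmono (X Y : eqType) k l (M : 'M[nat]_(k, l)) (ii : seq X) (jj : seq Y) z x0 y0 :
  size ii = k -> size jj = l ->
  count_mem z (pmono M ii jj) =
  \sum_(r < k) \sum_(s < l) M r s * ((nth x0 ii r, nth y0 jj s) == z).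
Proof.
move=> hi hj.
rewrite /pmono count_flatten sumn_map big_allpairs_dep (zip_enum x0 hi) (zip_enum y0 hj).
rewrite big_map big_enum /=; apply: eq_bigr => r _.
rewrite big_map big_enum /=; apply: eq_bigr => s _.
by rewrite count_nseq mulnC.
Qed.

Lemma pmono_fst (X Y : eqType) k l (M : 'M[nat]_(k, l)) (ii : seq X) (jj : seq Y) :
  packed M -> size ii = k -> size jj = l -> {subset ii <= [seq v.1 | v <- pmono M ii jj]}.
Proof.
move=> /andP[/forallP hr _] hi hj x /(nthP x) [r rk <-].
rewrite hi in rk; have /existsP [s hs] := hr (Ordinal rk).
have [y _] : exists y : Y, True by apply: (@nth_pick _ jj s); rewrite hj.
set z := (nth x ii r, nth y jj s).
suff : z \in pmono M ii jj by move=> zi; apply/mapP; exists z.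
apply/count_memPn => /eqP; apply/negP; rewrite -lt0n (count_pmono _ _ x y hi hj).
rewrite (bigD1 (Ordinal rk)) //= (bigD1 s) //= -/z eqxx muln1.
by rewrite -addnA ltn_addr // lt0n.
Qed.

Lemma pmono_snd (X Y : eqType) k l (M : 'M[nat]_(k, l)) (ii : seq X) (jj : seq Y) :
  packed M -> size ii = k -> size jj = l -> {subset jj <= [seq v.2 | v <- pmono M ii jj]}.
Proof.
move=> /andP[_ /forallP hc] hi hj y /(nthP y) [s sl <-].
rewrite hj in sl; have /existsP [r hr] := hc (Ordinal sl).
have [x _] : exists x : X, True by apply: (@nth_pick _ ii r); rewrite hi.
set z := (nth x ii r, nth y jj s).
suff : z \in pmono M ii jj by move=> zi; apply/mapP; exists z.
apply/count_memPn => /eqP; apply/negP; rewrite -lt0n (count_pmono _ _ x y hi hj).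
rewrite (bigD1 r) //= (bigD1 (Ordinal sl)) //= -/z eqxx muln1.
by rewrite -addnA ltn_addr // lt0n.
Qed.

Lemma mu_entry k l k1 l1 (M : 'M[nat]_(k, l)) (s1 : {ffun 'I_k -> 'I_k1})
  (t1 : {ffun 'I_l -> 'I_l1}) a b :
  (mu s1 *m M *m (mu t1)^T)%R a b = \sum_(r < k) \sum_(j < l) (a == s1 r) * M r j * (b == t1 j).
Proof.
rewrite mxE.
under eq_bigr => j _ do rewrite !mxE.
under eq_bigr => j _ do under eq_bigr => r _ do rewrite mxE.
rewrite exchange_big /=; apply: eq_bigr => j _.
rewrite mulr_suml; apply: eq_bigr => r _ //.
Qed.

Lemma push (X Y : eqType) k l k1 l1 (M : 'M[nat]_(k, l)) (s1 : {ffun 'I_k -> 'I_k1})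
  (t1 : {ffun 'I_l -> 'I_l1}) (ii1 : seq X) (jj1 : seq Y) :
  size ii1 = k1 -> size jj1 = l1 ->
  perm_eq (pmono (mu s1 *m M *m (mu t1)^T)%R ii1 jj1)
          (pmono M (pull ii1 (gr s1)) (pull jj1 (gr t1))).
Proof.
move=> hi hj.
have a1 : all (fun i => i < size ii1) (gr s1) by rewrite hi gr_lt.
have a2 : all (fun i => i < size jj1) (gr t1) by rewrite hj gr_lt.
rewrite /perm_eq; apply/allP => z _; apply/eqP.
rewrite (count_pmono _ _ z.1 z.2 hi hj).
rewrite (count_pmono _ _ z.1 z.2); last 2 first.
- by rewrite size_pull // size_gr.
- by rewrite size_pull // size_gr.
rewrite (pull_nth z.1) // (pull_nth z.2) //.
under eq_bigr => a _ do under eq_bigr => b _ do rewrite mu_entry.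
transitivity (\sum_(a < k1) \sum_(b < l1) \sum_(r < k) \sum_(j < l)
   (a == s1 r) * M r j * (b == t1 j) * ((nth z.1 ii1 a, nth z.2 jj1 b) == z)).
  apply: eq_bigr => a _; apply: eq_bigr => b _.
  rewrite big_distrl; apply: eq_bigr => r _; by rewrite big_distrl.
rewrite exchange_big; under eq_bigr => b _ do rewrite exchange_big.
rewrite exchange_big; apply: eq_bigr => r _.
under eq_bigr => b _ do rewrite exchange_big.
rewrite exchange_big; apply: eq_bigr => j _.
rewrite (bigD1 (t1 j)) //= [X in _ + X]big1 ?addn0; last first.
  by move=> b ne; apply: big1 => a _; rewrite (negbTE ne) !muln0 mul0n.
rewrite (bigD1 (s1 r)) //= [X in _ + X]big1 ?addn0; last first.
  by move=> a ne; rewrite (negbTE ne).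
rewrite !eqxx mul1n muln1 (nth_map 0) ?(nth_map 0) ?size_gr //.
by rewrite !nth_gr.
Qed.

Local Open Scope ring_scope.

Lemma index_le d (T : orderType d) (s : seq T) u v : sorted <%O s -> u \in s -> v \in s ->
  (index u s <= index v s)%N = (u <= v)%O.
Proof.
move=> ss us vs.
by rewrite -(lt_sorted_leq_nth u ss) ?nth_index ?inE ?index_mem.
Qed.

Lemma index_lt d (T : orderType d) (s : seq T) u v : sorted <%O s -> u \in s -> v \in s ->
  (index u s < index v s)%N = (u < v)%O.
Proof.
move=> ss us vs.
by rewrite -(lt_sorted_ltn_nth u ss) ?nth_index ?inE ?index_mem.
Qed.

Section Core.
Variables (dA dB : Order.disp_t) (A : orderType dA) (B : orderType dB).

Lemma core_fixed (UA : seq A) (UB : seq B) k k1 k2 (s1 : {ffun 'I_k -> 'I_k1})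
  (s2 : {ffun 'I_k -> 'I_k2}) (F : seq (A *l B) -> rat) :
  uniq UA -> uniq UB -> adm s1 s2 ->
  \sum_(ii1 <- all_tuples UA k1 | sorted <%O ii1)
    \sum_(ii2 <- all_tuples UB k2 | sorted <%O ii2) F (comb (gr s1) (gr s2) ii1 ii2)
  = \sum_(ii <- all_tuples [seq ((x, y) : A *l B) | x <- UA, y <- UB] k |
          sorted <%O ii && shp ii k1 k2 (gr s1) (gr s2)) F ii.
Proof.
move=> uA uB hadm.
have -> : \sum_(ii1 <- all_tuples UA k1 | sorted <%O ii1)
    \sum_(ii2 <- all_tuples UB k2 | sorted <%O ii2) F (comb (gr s1) (gr s2) ii1 ii2) =
  \sum_(p <- [seq (u, v) | u <- all_tuples UA k1, v <- all_tuples UB k2] |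
           sorted <%O p.1 && sorted <%O p.2) F (comb (gr s1) (gr s2) p.1 p.2).
  rewrite [LHS]big_mkcond [RHS]big_mkcond big_allpairs /=; apply: eq_bigr => u _.
  case: (sorted <%O u) => /=; first by rewrite big_mkcond.
  by rewrite big1.
symmetry.
apply: (@reindex_seq _ _ _ _ _ _ _ _ _
   (fun ii : seq (A *l B) => (dseq [seq x.1 | x <- ii], dseq [seq x.2 | x <- ii]))
   (fun p => (comb (gr s1) (gr s2) p.1 p.2 : seq (A *l B)))).
- apply: uniq_all_tuples; apply: allpairs_uniq => // [[x y] [x' y']] _ _ /= [-> ->] //.
- apply: allpairs_uniq; try exact: uniq_all_tuples.
  by move=> [x y] [x' y'] _ _ /= [-> ->].
- move=> ii hii /andP[so sh]; rewrite /= !dseq_sorted andbT.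
  have /andP[h1 h2] := dec_in hii sh; rewrite andbT; exact: (allpairs_f (@pair _ _) h1 h2).
- move=> [ii1 ii2] /allpairsP [[u v] [/= hu hv [-> ->]]] /andP[/= so1 so2].
  have hu' := hu; have hv' := hv; rewrite mem_all_tuples in hu'; rewrite mem_all_tuples in hv'.
  move: hu' hv' => /andP[/eqP sz1 _] /andP[/eqP sz2 _].
  by rewrite (c_in s1 s2 sz1 sz2) ?(sorted_c hadm sz1 sz2) ?(shp_c hadm sz1 sz2).
- by move=> ii _ /andP[_ sh] /=; rewrite (comb_dec sh).
- move=> [ii1 ii2] /allpairsP [[u v] [/= hu hv [-> ->]]] /andP[/= so1 so2].
  have hu' := hu; have hv' := hv; rewrite mem_all_tuples in hu'; rewrite mem_all_tuples in hv'.
  move: hu' hv' => /andP[/eqP sz1 _] /andP[/eqP sz2 _].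
  by rewrite (dseq_c1 hadm sz1 sz2) ?(dseq_c2 hadm sz1 sz2).
Qed.

Lemma shape_adm (ii : seq (A *l B)) k n1 n2 (s1 : {ffun 'I_k -> 'I_n1}) (s2 : {ffun 'I_k -> 'I_n2}) :
  size ii = k -> sorted <%O ii ->
  n1 = size (dseq [seq x.1 | x <- ii]) -> n2 = size (dseq [seq x.2 | x <- ii]) ->
  gr s1 = [seq index x.1 (dseq [seq y.1 | y <- ii]) | x <- ii] ->
  gr s2 = [seq index x.2 (dseq [seq y.2 | y <- ii]) | x <- ii] ->
  adm s1 s2.
Proof.
set d1 := dseq _; set d2 := dseq _ => hs so e1 e2 g1 g2.
have E1 x0 (r : 'I_k) : nat_of_ord (s1 r) = index (nth x0 ii r).1 d1.
  by rewrite -nth_gr g1 (nth_map x0) // hs.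
have E2 x0 (r : 'I_k) : nat_of_ord (s2 r) = index (nth x0 ii r).2 d2.
  by rewrite -nth_gr g2 (nth_map x0) // hs.
have inii x0 (r : 'I_k) : nth x0 ii r \in ii by rewrite mem_nth // hs.
have in1 x0 (r : 'I_k) : (nth x0 ii r).1 \in d1.
  by rewrite mem_dseq; apply: map_f; apply: inii.
have in2 x0 (r : 'I_k) : (nth x0 ii r).2 \in d2.
  by rewrite mem_dseq; apply: map_f; apply: inii.
apply/and4P; split.
- apply/forallP => y; have := ltn_ord y; rewrite {2}e1 => hy.
  have [z0 _] := nth_pick hy.
  have : nth z0 d1 y \in [seq x.1 | x <- ii] by rewrite -mem_dseq mem_nth.
  move=> /mapP [x xii ex]; have [x0 _] : exists x0 : A *l B, True by exists x.
  move: xii => /(nthP x0) [r hr ex'].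
  have hr' : (r < k)%N by rewrite -hs.
  apply/existsP; exists (Ordinal hr'); apply/eqP; apply: ord_inj.
  by rewrite (E1 x0) /= ex' -ex index_uniq ?dseq_uniq.
- apply/forallP => y; have := ltn_ord y; rewrite {2}e2 => hy.
  have [z0 _] := nth_pick hy.
  have : nth z0 d2 y \in [seq x.2 | x <- ii] by rewrite -mem_dseq mem_nth.
  move=> /mapP [x xii ex]; have [x0 _] : exists x0 : A *l B, True by exists x.
  move: xii => /(nthP x0) [r hr ex'].
  have hr' : (r < k)%N by rewrite -hs.
  apply/existsP; exists (Ordinal hr'); apply/eqP; apply: ord_inj.
  by rewrite (E2 x0) /= ex' -ex index_uniq ?dseq_uniq.
- apply/forallP => i; apply/forallP => j; apply/implyP => ij.
  have [x0 _] : exists x0 : A *l B, True by apply: (nth_pick (s := ii) (i := i)); rewrite hs.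
  rewrite !(E1 x0) index_le ?dseq_sorted ?in1 //.
  have : (nth x0 ii i <= nth x0 ii j)%O by rewrite (lt_sorted_leq_nth x0 so) ?inE ?hs.
  by rewrite leEprodlexi => /andP[].
- apply/forallP => i; apply/forallP => j; apply/implyP => /andP[ij /eqP eij].
  have [x0 _] : exists x0 : A *l B, True by apply: (nth_pick (s := ii) (i := i)); rewrite hs.
  rewrite !(E2 x0) index_lt ?dseq_sorted ?in2 //.
  have e : (nth x0 ii i).1 = (nth x0 ii j).1.
    by rewrite -(nth_index x0.1 (in1 x0 i)) -(nth_index x0.1 (in1 x0 j)) -!E1 eij.
  have : (nth x0 ii i < nth x0 ii j)%O by rewrite (lt_sorted_ltn_nth x0 so) ?inE ?hs.
  by rewrite ltEprodlexi e lexx.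
Qed.

Lemma shape_one (ii : seq (A *l B)) k (x : rat) :
  size ii = k -> sorted <%O ii ->
  \sum_(k1 < k.+1) \sum_(k2 < k.+1) \sum_(s1 : {ffun 'I_k -> 'I_k1})
    \sum_(s2 : {ffun 'I_k -> 'I_k2} | adm s1 s2)
      ((shp ii k1 k2 (gr s1) (gr s2))%:R * x) = x.
Proof.
move=> hs so; rewrite /shp.
set d1 := dseq _; set d2 := dseq _.
set a := [seq index _ d1 | _ <- ii]; set b := [seq index _ d2 | _ <- ii].
have K1 : (size d1 < k.+1)%N by rewrite ltnS -hs (leq_trans (size_dseq _)) ?size_map.
have K2 : (size d2 < k.+1)%N by rewrite ltnS -hs (leq_trans (size_dseq _)) ?size_map.
rewrite (bigD1 (Ordinal K1)) //= [X in _ + X]big1 ?addr0; last first.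
  move=> k1 ne; apply: big1 => k2 _; apply: big1 => s1 _; apply: big1 => s2 _.
  suff -> : (size d1 == k1) = false by rewrite mul0r.
  by apply/eqP => e; move: ne; rewrite -val_eqE /= e eqxx.
rewrite (bigD1 (Ordinal K2)) //= [X in _ + X]big1 ?addr0; last first.
  move=> k2 ne; apply: big1 => s1 _; apply: big1 => s2 _.
  suff -> : (size d2 == k2) = false by rewrite andbF mul0r.
  by apply/eqP => e; move: ne; rewrite -val_eqE /= e eqxx.
rewrite !eqxx /=.
have H1 (r : 'I_k) : (nth 0 a r < size d1)%N.
  have [x0 _] : exists x0 : A *l B, True by apply: (nth_pick (s := ii) (i := r)); rewrite hs.
  by rewrite (nth_map x0) ?hs // index_mem mem_dseq; apply: map_f; rewrite mem_nth ?hs.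
have H2 (r : 'I_k) : (nth 0 b r < size d2)%N.
  have [x0 _] : exists x0 : A *l B, True by apply: (nth_pick (s := ii) (i := r)); rewrite hs.
  by rewrite (nth_map x0) ?hs // index_mem mem_dseq; apply: map_f; rewrite mem_nth ?hs.
pose S1 : {ffun 'I_k -> 'I_(size d1)} := [ffun r => Ordinal (H1 r)].
pose S2 : {ffun 'I_k -> 'I_(size d2)} := [ffun r => Ordinal (H2 r)].
have g1 : gr S1 = a by rewrite gr_mk // size_map.
have g2 : gr S2 = b by rewrite gr_mk // size_map.
have hadm : adm S1 S2 by apply: (shape_adm hs so).
rewrite (bigD1 S1) //= [X in _ + X]big1 ?addr0; last first.
  move=> s1 ne; apply: big1 => s2 _.
  by rewrite -g1 (inj_eq (@gr_inj _ _)) [S1 == _]eq_sym (negbTE ne) mul0r.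
rewrite (bigD1 S2) //= [X in _ + X]big1 ?addr0; last first.
  move=> s2 /andP[_ ne].
  by rewrite -g1 -g2 !(inj_eq (@gr_inj _ _)) [S2 == _]eq_sym (negbTE ne) andbF mul0r.
by rewrite -g1 -g2 !eqxx mul1r.
Qed.

Lemma core (UA : seq A) (UB : seq B) k (F : seq (A *l B) -> rat) :
  uniq UA -> uniq UB ->
  \sum_(ii <- all_tuples [seq ((x, y) : A *l B) | x <- UA, y <- UB] k | sorted <%O ii) F ii =
  \sum_(k1 < k.+1) \sum_(k2 < k.+1) \sum_(s1 : {ffun 'I_k -> 'I_k1})
    \sum_(s2 : {ffun 'I_k -> 'I_k2} | adm s1 s2)
   \sum_(ii1 <- all_tuples UA k1 | sorted <%O ii1)
    \sum_(ii2 <- all_tuples UB k2 | sorted <%O ii2) F (comb (gr s1) (gr s2) ii1 ii2).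
Proof.
move=> uA uB.
set T := all_tuples _ k.
transitivity (\sum_(ii <- T) \sum_(k1 < k.+1) \sum_(k2 < k.+1) \sum_(s1 : {ffun 'I_k -> 'I_k1})
    \sum_(s2 : {ffun 'I_k -> 'I_k2} | adm s1 s2)
      ((sorted <%O ii && shp ii k1 k2 (gr s1) (gr s2))%:R * F ii)).
  rewrite big_mkcond; apply: eq_big_seq => ii; rewrite mem_all_tuples => /andP[/eqP hs _].
  case: ifP => so; first by rewrite /= (shape_one (F ii) hs so).
  by symmetry; do 4 (apply: big1 => ? _); rewrite mul0r.
rewrite exchange_big; apply: eq_bigr => k1 _.
rewrite exchange_big; apply: eq_bigr => k2 _.
rewrite exchange_big; apply: eq_bigr => s1 _.
rewrite exchange_big; apply: eq_bigr => s2 hadm.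
rewrite core_fixed // [RHS]big_mkcond; apply: eq_bigr => ii _.
by case: ifP; rewrite ?mul1r ?mul0r.
Qed.
End Core.

Lemma mset_eq (T : choiceType) (s : seq T) (n : {mset T}%mset) :
  (seq_mset s == n) = perm_eq s n.
Proof.
rewrite -{1}(seq_mset_id n); apply/eqP/idP; first by move/eq_seq_msetP.
by move/eq_seq_msetP.
Qed.

Lemma nz_sum (T : eqType) (s : seq T) (F : T -> nat) :
  (\sum_(x <- s) F x != 0)%N -> exists2 x, x \in s & (F x != 0)%N.
Proof.
elim: s => [|x s IH]; first by rewrite big_nil.
rewrite big_cons; case: (boolP (F x == 0)%N) => [/eqP ->|fx] /=.
  by rewrite add0n => /IH [y ys fy]; exists y => //; rewrite inE ys orbT.
by move=> _; exists x => //; rewrite mem_head.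
Qed.

Section LHS.
Variables (d1 d2 e1 e2 : Order.disp_t)
  (X1 : orderType d1) (X2 : orderType d2) (Y1 : orderType e1) (Y2 : orderType e2)
  (k l : nat) (M : 'M[nat]_(k, l)) (hM : packed M)
  (n1 : {mset (X1 * Y1)%type}%mset) (n2 : {mset (X2 * Y2)%type}%mset).

Let UX1 := undup [seq p.1 | p <- n1].
Let UY1 := undup [seq p.2 | p <- n1].
Let UX2 := undup [seq p.1 | p <- n2].
Let UY2 := undup [seq p.2 | p <- n2].
Let UX := [seq ((x, y) : X1 *l X2) | x <- UX1, y <- UX2].
Let UY := [seq ((x, y) : Y1 *l Y2) | x <- UY1, y <- UY2].

Lemma uniq_UX : uniq UX.
Proof. by apply: allpairs_uniq; rewrite ?undup_uniq // => [[x y] [x' y']] _ _ /= [-> ->]. Qed.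
Lemma uniq_UY : uniq UY.
Proof. by apply: allpairs_uniq; rewrite ?undup_uniq // => [[x y] [x' y']] _ _ /= [-> ->]. Qed.

Definition Pm (m : {mset ((X1 *l X2) * (Y1 *l Y2))%type}%mset) : bool :=
  (seq_mset [seq (v.1.1, v.2.1) | v <- m] == n1) &&
  (seq_mset [seq (v.1.2, v.2.2) | v <- m] == n2).

Lemma Pm_fst m x : Pm m -> x \in [seq p.1 | p <- m] -> x \in UX.
Proof.
rewrite /Pm !mset_eq => /andP[h1 h2] /mapP [v vm ->].
have a1 : (v.1.1, v.2.1) \in (n1 : seq _) by rewrite -(perm_mem h1); apply: map_f.
have a2 : (v.1.2, v.2.2) \in (n2 : seq _) by rewrite -(perm_mem h2); apply: map_f.
case: v vm a1 a2 => [[x1 x2] [y1 y2]] /= _ a1 a2.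
apply/allpairsP; exists (x1, x2); split => //=; rewrite mem_undup.
  by apply/mapP; exists (x1, y1).
by apply/mapP; exists (x2, y2).
Qed.

Lemma Pm_snd m x : Pm m -> x \in [seq p.2 | p <- m] -> x \in UY.
Proof.
rewrite /Pm !mset_eq => /andP[h1 h2] /mapP [v vm ->].
have a1 : (v.1.1, v.2.1) \in (n1 : seq _) by rewrite -(perm_mem h1); apply: map_f.
have a2 : (v.1.2, v.2.2) \in (n2 : seq _) by rewrite -(perm_mem h2); apply: map_f.
case: v vm a1 a2 => [[x1 x2] [y1 y2]] /= _ a1 a2.
apply/allpairsP; exists (y1, y2); split => //=; rewrite mem_undup.
  by apply/mapP; exists (x1, y1).
by apply/mapP; exists (x2, y2).
Qed.

Lemma E_fst (m : {mset ((X1 *l X2) * (Y1 *l Y2))%type}%mset) ii jj x :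
  size ii = k -> size jj = l -> seq_mset (pmono M ii jj) == m ->
  x \in ii -> x \in [seq p.1 | p <- m].
Proof.
move=> hi hj; rewrite mset_eq => pe xi.
by rewrite -(perm_mem (perm_map _ pe)); apply: (pmono_fst hM hi hj).
Qed.

Lemma E_snd (m : {mset ((X1 *l X2) * (Y1 *l Y2))%type}%mset) ii jj x :
  size ii = k -> size jj = l -> seq_mset (pmono M ii jj) == m ->
  x \in jj -> x \in [seq p.2 | p <- m].
Proof.
move=> hi hj; rewrite mset_eq => pe xi.
by rewrite -(perm_mem (perm_map _ pe)); apply: (pmono_snd hM hi hj).
Qed.

Lemma PE (ii : seq (X1 *l X2)) (jj : seq (Y1 *l Y2)) :
  Pm (seq_mset (pmono M ii jj)) =
  perm_eq (pmono M [seq x.1 | x <- ii] [seq x.1 | x <- jj]) n1 &&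
  perm_eq (pmono M [seq x.2 | x <- ii] [seq x.2 | x <- jj]) n2.
Proof.
rewrite /Pm !mset_eq.
rewrite (permPl (perm_map _ (perm_eq_seq_mset _))).
rewrite (permPl (perm_map _ (perm_eq_seq_mset _))).
by rewrite (map_pmono M ii jj (@fst _ _) (@fst _ _)) (map_pmono M ii jj (@snd _ _) (@snd _ _)).
Qed.

Lemma lhs_form :
  iota_map (Phi (X := X1 *l X2) (Y := Y1 *l Y2) M) n1 n2 =
  \sum_(ii <- all_tuples UX k | sorted <%O ii) \sum_(jj <- all_tuples UY l | sorted <%O jj)
    (perm_eq (pmono M [seq x.1 | x <- ii] [seq x.1 | x <- jj]) n1 &&
     perm_eq (pmono M [seq x.2 | x <- ii] [seq x.2 | x <- jj]) n2)%:R.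
Proof.
rewrite /iota_map /Phi.
set cands := undup _.
transitivity (\sum_(m <- cands | Pm m) ((\sum_(ii <- all_tuples UX k) \sum_(jj <- all_tuples UY l)
   [&& sorted <%O ii, sorted <%O jj & seq_mset (pmono M ii jj) == m])%N%:R : rat)).
  rewrite big_seq_cond [RHS]big_seq_cond; apply: eq_bigr => m /andP[_ pm]; congr (_%:R).
  transitivity (\sum_(ii <- all_tuples (undup [seq p.1 | p <- (m : {mset ((X1 *l X2) * (Y1 *l Y2))%type}%mset)]) k) \sum_(jj <- all_tuples UY l)
   [&& sorted <%O ii, sorted <%O jj & seq_mset (pmono M ii jj) == m])%N.
    apply: eq_big_seq => ii; rewrite mem_all_tuples => /andP[/eqP hi _].
    apply: big_uniq_supp; rewrite ?uniq_all_tuples ?undup_uniq ?uniq_UY //.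
    - move=> jj; rewrite !mem_all_tuples => /andP[/eqP hj _]; rewrite hj eqxx /=.
      rewrite eqb0 negbK => /and3P[_ _ e]; apply/allP => y yj.
      exact: (Pm_snd pm (E_snd hi hj e yj)).
    - move=> jj; rewrite !mem_all_tuples => /andP[/eqP hj _]; rewrite hj eqxx /=.
      rewrite eqb0 negbK => /and3P[_ _ e]; apply/allP => y yj.
      by move: (E_snd hi hj e yj); rewrite -mem_undup.
  apply: big_uniq_supp; rewrite ?uniq_all_tuples ?undup_uniq ?uniq_UX //.
  - move=> ii; rewrite !mem_all_tuples => /andP[/eqP hi _]; rewrite hi eqxx /=.
    move=> /nz_sum [jj]; rewrite mem_all_tuples => /andP[/eqP hj _].
    rewrite eqb0 negbK => /and3P[_ _ e]; apply/allP => x xi.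
    exact: (Pm_fst pm (E_fst hi hj e xi)).
  - move=> ii; rewrite !mem_all_tuples => /andP[/eqP hi _]; rewrite hi eqxx /=.
    move=> /nz_sum [jj]; rewrite mem_all_tuples => /andP[/eqP hj _].
    rewrite eqb0 negbK => /and3P[_ _ e]; apply/allP => x xi.
    by move: (E_fst hi hj e xi); rewrite -mem_undup.
rewrite [RHS]big_mkcond.
rewrite [RHS]big_mkcond -natr_sum exchange_big natr_sum; apply: eq_bigr => ii _.
rewrite exchange_big natr_sum /=.
case: (boolP (sorted <%O ii)) => si; last first.
  by apply: big1 => jj _; rewrite big1 // => m _; rewrite (negbTE si).
rewrite [RHS]big_mkcond; apply: eq_bigr => jj _.
case: (boolP (sorted <%O jj)) => sj; last first.
  by rewrite big1 // => m _; rewrite (negbTE sj) andbF.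
congr (_%:R); rewrite -PE.
set q := seq_mset _.
case: (boolP (Pm q)) => pq; last first.
  apply: big1 => m pm; case: eqP => // e; by move: pq; rewrite e pm.
have qc : q \in cands.
  rewrite mem_undup; apply: map_f; rewrite mem_all_tuples.
  move: (pq); rewrite /Pm !mset_eq => /andP[h1 h2].
  rewrite (permPl (perm_map _ (perm_eq_seq_mset _))) in h1.
  rewrite (permPl (perm_map _ (perm_eq_seq_mset _))) in h2.
  rewrite -(perm_size h1) size_map eqxx /=.
  apply/allP => v vp.
  have a1 : (v.1.1, v.2.1) \in (n1 : seq _) by rewrite -(perm_mem h1); apply: map_f.
  have a2 : (v.1.2, v.2.2) \in (n2 : seq _) by rewrite -(perm_mem h2); apply: map_f.
  apply/allpairsP; exists ((v.1.1, v.2.1), (v.1.2, v.2.2)); split; rewrite ?mem_undup //.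
  by case: v {vp a1 a2} => [[? ?] [? ?]].
rewrite big_mkcond (bigD1_seq q) ?undup_uniq //= pq eqxx.
rewrite big1 ?addn0 // => m ne; case: ifP => // _.
by rewrite eq_sym (negbTE ne).
Qed.
End LHS.

Lemma sum_adm_comm (T : Type) (s : seq T) (P : pred T) l
  (G : T -> forall l1 l2 : 'I_l.+1, {ffun 'I_l -> 'I_l1} -> {ffun 'I_l -> 'I_l2} -> rat) :
  \sum_(x <- s | P x) \sum_(l1 < l.+1) \sum_(l2 < l.+1) \sum_(t1 : {ffun 'I_l -> 'I_l1})
     \sum_(t2 : {ffun 'I_l -> 'I_l2} | adm t1 t2) G x l1 l2 t1 t2 =
  \sum_(l1 < l.+1) \sum_(l2 < l.+1) \sum_(t1 : {ffun 'I_l -> 'I_l1})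
     \sum_(t2 : {ffun 'I_l -> 'I_l2} | adm t1 t2) \sum_(x <- s | P x) G x l1 l2 t1 t2.
Proof.
rewrite exchange_big; apply: eq_bigr => l1 _.
rewrite exchange_big; apply: eq_bigr => l2 _.
rewrite exchange_big; apply: eq_bigr => t1 _.
by rewrite exchange_big.
Qed.

Lemma Phi_push d d' (X : orderType d) (Y : orderType d') k l k1 l1 (M : 'M[nat]_(k, l))
  (s1 : {ffun 'I_k -> 'I_k1}) (t1 : {ffun 'I_l -> 'I_l1}) (n : {mset (X * Y)%type}%mset) :
  Phi (X := X) (Y := Y) (mu s1 *m M *m (mu t1)^T) n =
  \sum_(ii1 <- all_tuples (undup [seq p.1 | p <- n]) k1 | sorted <%O ii1)
    \sum_(jj1 <- all_tuples (undup [seq p.2 | p <- n]) l1 | sorted <%O jj1)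
      (perm_eq (pmono M (pull ii1 (gr s1)) (pull jj1 (gr t1))) n)%:R.
Proof.
rewrite /Phi natr_sum [RHS]big_mkcond; apply: eq_big_seq => ii.
rewrite mem_all_tuples => /andP[/eqP hi _].
rewrite natr_sum; case: (boolP (sorted <%O ii)) => si; last first.
  by rewrite big1 // => jj _; rewrite (negbTE si).
rewrite [RHS]big_mkcond; apply: eq_big_seq => jj.
rewrite mem_all_tuples => /andP[/eqP hj _].
case: (boolP (sorted <%O jj)) => sj; last by [].
rewrite /= mset_eq.
by rewrite (permPl (push M s1 t1 hi hj)).
Qed.

Unset Implicit Arguments.

Theorem mainTheorem15 (d1 d2 e1 e2 : Order.disp_t)
  (X1 : orderType d1) (X2 : orderType d2) (Y1 : orderType e1) (Y2 : orderType e2)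
  (cX1 : exists f : X1 -> nat, injective f) (cX2 : exists f : X2 -> nat, injective f)
  (cY1 : exists f : Y1 -> nat, injective f) (cY2 : exists f : Y2 -> nat, injective f)
  (k l : nat) (M : 'M[nat]_(k, l)) (hM : packed M)
  (n1 : {mset (X1 * Y1)%type}%mset) (n2 : {mset (X2 * Y2)%type}%mset) :
  iota_map (Phi (X := X1 *l X2) (Y := Y1 *l Y2) M) n1 n2 =
  \sum_(k1 < k.+1) \sum_(k2 < k.+1)
   \sum_(s1 : {ffun 'I_k -> 'I_k1}) \sum_(s2 : {ffun 'I_k -> 'I_k2} | adm s1 s2)
  \sum_(l1 < l.+1) \sum_(l2 < l.+1)
   \sum_(t1 : {ffun 'I_l -> 'I_l1}) \sum_(t2 : {ffun 'I_l -> 'I_l2} | adm t1 t2)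
    tensor (Phi (X := X1) (Y := Y1) (mu s1 *m M *m (mu t1)^T))
           (Phi (X := X2) (Y := Y2) (mu s2 *m M *m (mu t2)^T)) n1 n2.
Proof.
rewrite (lhs_form hM) core ?undup_uniq //.
apply: eq_bigr => k1 _; apply: eq_bigr => k2 _; apply: eq_bigr => s1 _; apply: eq_bigr => s2 hadm.
transitivity (\sum_(ii1 <- all_tuples (undup [seq p.1 | p <- n1]) k1 | sorted <%O ii1)
  \sum_(ii2 <- all_tuples (undup [seq p.1 | p <- n2]) k2 | sorted <%O ii2)
  \sum_(l1 < l.+1) \sum_(l2 < l.+1)
   \sum_(t1 : {ffun 'I_l -> 'I_l1}) \sum_(t2 : {ffun 'I_l -> 'I_l2} | adm t1 t2)
   \sum_(jj1 <- all_tuples (undup [seq p.2 | p <- n1]) l1 | sorted <%O jj1)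
   \sum_(jj2 <- all_tuples (undup [seq p.2 | p <- n2]) l2 | sorted <%O jj2)
    ((perm_eq (pmono M (pull ii1 (gr s1)) (pull jj1 (gr t1))) n1)%:R *
     (perm_eq (pmono M (pull ii2 (gr s2)) (pull jj2 (gr t2))) n2)%:R : rat)).
  rewrite big_seq_cond [RHS]big_seq_cond; apply: eq_bigr => ii1.
  rewrite mem_all_tuples => /andP[/andP[/eqP sz1 _] _].
  rewrite big_seq_cond [RHS]big_seq_cond; apply: eq_bigr => ii2.
  rewrite mem_all_tuples => /andP[/andP[/eqP sz2 _] _].
  rewrite (c_fst s1 s2 sz1 sz2) (c_snd s1 s2 sz1 sz2) core ?undup_uniq //.
  apply: eq_bigr => l1 _; apply: eq_bigr => l2 _; apply: eq_bigr => t1 _; apply: eq_bigr => t2 _.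
  rewrite big_seq_cond [RHS]big_seq_cond; apply: eq_bigr => jj1.
  rewrite mem_all_tuples => /andP[/andP[/eqP sy1 _] _].
  rewrite big_seq_cond [RHS]big_seq_cond; apply: eq_bigr => jj2.
  rewrite mem_all_tuples => /andP[/andP[/eqP sy2 _] _].
  by rewrite (c_fst t1 t2 sy1 sy2) (c_snd t1 t2 sy1 sy2) -mulnb natrM.
under eq_bigr => ii1 _ do rewrite sum_adm_comm.
rewrite sum_adm_comm.
apply: eq_bigr => l1 _; apply: eq_bigr => l2 _; apply: eq_bigr => t1 _; apply: eq_bigr => t2 _.
rewrite /tensor !Phi_push mulr_suml; apply: eq_bigr => ii1 _.
rewrite exchange_big mulr_suml; apply: eq_bigr => jj1 _.
rewrite mulr_sumr; apply: eq_bigr => ii2 _.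
by rewrite mulr_sumr.
Qed.
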